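(* Let $(X,d)$ be a metric space, $\mu$ a Borel probability measure on $X$, and $T:X\to X$ a measurable map preserving $\mu$. Let $B_1\supseteq B_2\supseteq\cdots$ be a decreasing sequence of measurable subsets of $X$ with $\lim_{n\to\infty}\mu(B_n)=0$. Then $$\liminf_{n\to\infty}\frac{\log\tau_{B_n}(x)}{-\log\mu(B_n)}\ge 1\quad\text{for }\mu\text{-a.e. }x\in X.$$
   Context: For a set $A\subseteq X$, the waiting (hitting) time is $\tau_A(x)=\min\{n\in\mathbf N: T^n(x)\in A\}$, with $\tau_A(x)=\infty$ if no such $n$ exists. *)

(* Defs.v *)
From HB Require Import structures.
From mathcomp Require Import all_boot all_order all_algebra.
From mathcomp Require Import all_classical all_reals all_analysis.
Set Implicit Arguments. Unset Strict Implicit. Unset Printing Implicit Defensive.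
Import Order.TTheory GRing.Theory Num.Theory.
Local Open Scope classical_set_scope.
Local Open Scope ring_scope.

Notation borel X := (g_sigma_algebraType (@open X)).

(* Hitting (waiting) time tau_A(x) = min { n >= 1 : T^n x \in A },
   valued in \bar R, equal to +oo when the set is empty
   (the infimum of a set of naturals is its minimum). *)
Definition hitting_time (R : realType) (X : Type) (T : X -> X) (A : set X)
    (x : X) : \bar R :=
  ereal_inf [set (n%:R)%:E | n in [set n : nat | (0 < n)%N /\ A (iter n T x)]].

Definition elog (R : realType) (t : \bar R) : \bar R :=
  match t with
  | r%:E => (ln r)%:E
  | +oo%E => +oo%E
  | -oo%E => -oo%E
  end.

Definition neglog (R : realType) (m : \bar R) : \bar R :=
  if m == 0%E then +oo%E else (- ln (fine m))%:E.

Definition hit_ratio (R : realType) (tau m : \bar R) : \bar R :=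
  if tau == +oo%E then +oo%E else (elog tau * (neglog m)^-1)%E.

(* Main.v *)
Require Import Defs.
From HB Require Import structures.
From mathcomp Require Import all_boot all_order all_algebra.
From mathcomp Require Import all_classical all_reals all_analysis.
From mathcomp Require Import ring lra zify.
From Stdlib Require Import Lia.
Import Order.TTheory GRing.Theory Num.Theory.
Local Open Scope classical_set_scope.
Local Open Scope ring_scope.

Lemma liminf_ge_ev (R : realType) (u : nat -> \bar R) (a : \bar R) N :
  (forall n, (N <= n)%N -> (a <= u n)%E) -> (a <= limn_einf u)%E.
Proof.
move=> Hu; rewrite limn_einf_lim; apply: lime_ge; first exact: is_cvg_einfs.
exists N => // n /= Nn; apply/ereal_infP => _ [k /= nk <-].
by apply: Hu; exact: leq_trans nk.
Qed.

Lemma ge1_from (R : realType) (L : \bar R) :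
  (forall k : nat, ((1 - (k.+2)%:R^-1)%:E <= L)%E) -> (1 <= L)%E.
Proof.
case: L => [r||] H; last 2 first.
- exact: leey.
- by have := H 0%N; rewrite leeNy_eq.
rewrite lee_fin; apply/negP => /negP; rewrite -ltNge => /ltr_add_invr [k hk].
have := H k; rewrite lee_fin => hr.
have : (k.+2%:R^-1 : R) <= k.+1%:R^-1.
  by rewrite lef_pV2 ?posrE ?ler_nat ?ltr0n.
move=> h; move: hk hr h; set a := (k.+1%:R^-1); set b := (k.+2%:R^-1); move=> hk hr h; lra.
Qed.

Theorem proposition2p1 (R : realType) (X : pseudoPMetricType R)
  (hX : hausdorff_space X)
  (mu : probability (borel X) R)
  (T : borel X -> borel X)
  (mT : measurable_fun setT T)
  (Tpres : forall A : set (borel X), measurable A -> mu (T @^-1` A) = mu A)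
  (B : nat -> set (borel X))
  (mB : forall n, measurable (B n))
  (Bdecr : forall n, B n.+1 `<=` B n)
  (Blim : (fun n => mu (B n)) @ \oo --> 0%E) :
  {ae mu, forall x, (1 <= limn_einf
     (fun n => hit_ratio (hitting_time R T (B n) x) (mu (B n))))%E}.
Proof.
have hiter : forall i A, measurable A ->
    measurable ((iter i T) @^-1` A) /\ mu ((iter i T) @^-1` A) = mu A.
  elim=> [|i IH] A mA; first by split.
  have mTA : measurable (T @^-1` A) by rewrite -[T @^-1` A]setTI; exact: mT.
  have [h1 h2] := IH _ mTA; split; first exact: h1.
  by rewrite h2 Tpres.
have Bsub : forall m n, (m <= n)%N -> B n `<=` B m.
  move=> m n /subnK <-; elim: (n - m)%N => [//|k IH].
  by rewrite addSn; apply: subset_trans IH; exact: Bdecr.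
have hev : forall e : R, 0 < e -> exists N, forall n, (N <= n)%N -> (mu (B n) < e%:E)%E.
  move=> e e0; move/fine_cvgP: Blim => [Hf Hc].
  have Hl := cvgr_lt _ Hc _ e0.
  have [N1 _ HN1] := Hf; have [N2 _ HN2] := Hl.
  exists (maxn N1 N2) => n; rewrite geq_max => /andP[n1 n2].
  have := HN1 _ n1; have := HN2 _ n2 => /= h1 h2.
  by rewrite -(fineK h2) lte_fin.
pose c := fun p j : nat => ((2 ^ (p.+1 * j))%:R : R)^-1.
have c0 : forall p j, 0 < c p j.
  by move=> p j; rewrite invr_gt0 ltr0n expn_gt0.
have hmin : forall pj : nat * nat, exists m, (mu (B m) <= (c pj.1 pj.2)%:E)%E /\
    forall n, (mu (B n) <= (c pj.1 pj.2)%:E)%E -> (m <= n)%N.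
  case=> p j /=; have [N HN] := hev _ (c0 p j).
  have exP : exists n, `[< (mu (B n) <= (c p j)%:E)%E >].
    by exists N; apply/asboolP; apply/ltW/HN.
  case: (ex_minnP exP) => m /asboolP Hm Hmin.
  by exists m; split=> // n Hn; apply: Hmin; exact/asboolP.
case: (choice hmin) => mm Hmm.
pose K := fun p j : nat => (2 ^ (j.+1 * p))%N.
pose D := fun p j => \big[setU/set0]_(i < K p j) ((iter i.+1 T) @^-1` B (mm (p, j))).
have mD : forall p j, measurable (D p j).
  by move=> p j; apply: bigsetU_measurable => i _; exact: (hiter _ _ (mB _)).1.
have muD : forall p j, (mu (D p j) <= ((2 ^ p.+1)%:R / (2 ^ (j + 0.+1))%:R)%:E)%E.
  move=> p j.
  have H1 := content_subadditive mu (A := D p j)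
     (F := fun i => (iter i.+1 T) @^-1` B (mm (p, j))) (n := K p j)
     (fun i _ => (hiter _ _ (mB _)).1) (mD p j) (@subset_refl _ _).
  apply: (le_trans H1).
  have H2 : (\sum_(k < K p j) mu ((iter k.+1 T) @^-1` B (mm (p, j))) <=
      \sum_(k < K p j) (c p j)%:E)%E.
    apply: lee_sum => i _.
    by rewrite (hiter _ _ (mB _)).2; have [] := Hmm (p, j).
  apply: (le_trans H2).
  rewrite sumEFin sumr_const card_ord lee_fin -[c p j *+ _]mulr_natl le_eqVlt; apply/orP; left.
  rewrite /c /K eqr_div ?pnatr_eq0 ?expn_eq0 // -!natrM eqr_nat -!expnD.
  apply/eqP; congr (2 ^ _)%N; nia.
have hgood : forall p, {ae mu, forall x, exists J, forall j, (J <= j)%N -> ~ D p j x}.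
  move=> p.
  pose A := \bigcap_N \bigcup_(n in ~` `I_N) D p n.
  have mA : measurable A.
    by apply: bigcapT_measurable => N; apply: bigcup_measurable => k _; exact: mD.
  exists A; split => //.
  - apply/eqP; rewrite eq_le measure_ge0 andbT.
    have Hle : (\sum_(0 <= k <oo) mu (D p k) <=
        \sum_(0 <= k <oo) ((2 ^ p.+1)%:R / (2 ^ (k + 0.+1))%:R)%:E)%E.
      apply: lee_nneseries => [n _ _|n _]; first exact: measure_ge0.
      exact: muD.
    have Hs : (\sum_(0 <= k <oo) mu (D p k) < +oo)%E.
      apply: (le_lt_trans Hle).
      have := @cvg_geometric_eseries_half R ((2 ^ p.+1)%:R : R) 0.
      by move=> /cvg_lim ->; rewrite ?ltry.
    have Ht := nneseries_tail_cvg Hs (fun k _ => measure_ge0 _ _).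
    have Hc : cvgn (fun N => \sum_(N <= k <oo) mu (D p k))%E.
      by apply/cvg_ex; eexists; exact: Ht.
    have : (mu A <= limn (fun N => \sum_(N <= k <oo) mu (D p k)))%E.
      apply: lime_ge => //.
      exists 0%N => // N _ /=.
      apply: (@measure_sigma_subadditive_tail _ _ _ mu A (D p) N (mD p)) => //.
      by move=> x; apply.
    by rewrite (cvg_lim _ Ht).
  - move=> x /= Hn N _; apply: contrapT => Hc; apply: Hn; exists N => j Nj Dj.
    by apply: Hc; exists j => //=; rewrite ltnNge Nj.
have Hae := ae_foralln hgood.
apply: filterS Hae => x Hx.
apply: ge1_from => k.
have [J HJ] := Hx k.+1.
pose J' := J.+1.
have [N HN] := hev _ (c0 k.+1 J').
apply: (@liminf_ge_ev _ _ _ N) => n Nn.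
have KC : forall j, (J' <= j)%N -> (mu (B n) <= (c k.+1 j)%:E)%E ->
    ((((K k.+1 j).+1)%:R)%:E <= hitting_time R T (B n) x)%E.
  move=> j Jj Hmu; have [Hm1 Hm2] := Hmm (k.+1, j); have mn := Hm2 n Hmu.
  apply/ereal_infP => _ [i [i0 Bi] <-]; rewrite lee_fin ler_nat.
  rewrite ltnNge; apply/negP => iK.
  apply: (HJ j); first by rewrite /J' in Jj; lia.
  rewrite /D /=; suff : (\bigcup_(i < K k.+1 j) (iter i.+1 T @^-1` B (mm (k.+1, j)))) x by rewrite bigcup_mkord.
  exists i.-1; first by rewrite /=; lia.
  have -> : i.-1.+1 = i by lia.
  exact: (Bsub _ _ mn _ Bi).
have [mu0|mupos] := eqVneq (mu (B n)) 0%E.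
  have Hall : forall j, (J' <= j)%N ->
      ((((K k.+1 j).+1)%:R)%:E <= hitting_time R T (B n) x)%E.
    by move=> j Jj; apply: KC => //; rewrite mu0 lee_fin; exact: ltW (c0 _ j).
  rewrite /hit_ratio.
  case Et : (hitting_time R T (B n) x) Hall => [r| |] Hall; last 2 first.
  - by rewrite eqxx leey.
  - by have := Hall _ (leqnn _); rewrite leeNy_eq.
  exfalso.
  pose j := maxn J' (Num.Def.archi_bound `|r|).
  have := Hall j (leq_maxl _ _); rewrite lee_fin => h.
  have : r < ((K k.+1 j).+1)%:R.
    apply: le_lt_trans (ler_norm r) _.
    apply: lt_le_trans (archi_boundP (normr_ge0 r)) _.
    rewrite ler_nat.
    have h1 : (j < 2 ^ j)%N by exact: ltn_expl.
    have h2 : (2 ^ j <= 2 ^ (j.+1 * k.+1))%N by apply: leq_pexp2l => //; lia.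
    have h3 : (Num.Def.archi_bound `|r| <= j)%N by exact: leq_maxr.
    rewrite /K; apply: leq_trans h3 _; apply: leq_trans (ltnW h1) _.
    by apply: leq_trans h2 _.
  by rewrite ltNge h.
have Hfin : mu (B n) \is a fin_num by apply: fin_num_measure.
set m := fine (mu (B n)).
have Em : mu (B n) = m%:E by rewrite /m fineK.
have m0 : 0 < m.
  have : (0 < mu (B n))%E by rewrite lt0e mupos measure_ge0.
  by rewrite Em lte_fin.
have exj : exists j, (J' <= j)%N && (c k.+1 j.+1 < m).
  have [k0 hk0] := ltr_add_invr m0; rewrite add0r in hk0.
  exists (maxn J' k0); rewrite leq_maxl /=.
  apply: le_lt_trans hk0; rewrite /c lef_pV2 ?posrE ?ltr0n ?expn_gt0 // ler_nat.
  set jj := maxn J' k0.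
  have h1 : (jj.+1 < 2 ^ jj.+1)%N by exact: ltn_expl.
  have h2 : (2 ^ jj.+1 <= 2 ^ (k.+2 * jj.+1))%N by apply: leq_pexp2l => //; lia.
  have h3 : (k0 <= jj)%N by exact: leq_maxr.
  apply: leq_trans h2; apply: leq_trans (ltnW h1); by [].
case: (ex_minnP exj) => j /andP[Jj hj] jmin.
have Hmuj : (mu (B n) <= (c k.+1 j)%:E)%E.
  have [->|jJ] := eqVneq j J'; first exact/ltW/HN.
  have [j' Ej] : exists j', j = j'.+1 by exists j.-1; rewrite /J' in Jj; lia.
  rewrite Em lee_fin leNgt; apply/negP => hlt.
  have hJ' : (J' <= j')%N by rewrite /J' in Jj jJ *; lia.
  have := jmin j'; rewrite hJ' -Ej hlt => /(_ isT); lia.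
have Htau := KC j Jj Hmuj.
rewrite /hit_ratio.
case Et : (hitting_time R T (B n) x) Htau => [t| |] Htau; last 2 first.
- by rewrite eqxx leey.
- by rewrite leeNy_eq in Htau.
rewrite /= /neglog (negbTE mupos) -/m.
have cj1 : c k.+1 j < 1.
  rewrite /c invf_lt1 ?ltr0n ?expn_gt0 // ltr1n.
  have : (2 ^ 1 <= 2 ^ (k.+2 * j))%N by apply: leq_pexp2l => //; rewrite /J' in Jj; lia.
  by [].
have m1 : m < 1.
  by apply: le_lt_trans cj1; move: Hmuj; rewrite Em lee_fin.
have L0 : 0 < - ln m by rewrite oppr_gt0 ln_lt0 // m0 m1.
rewrite inver gt_eqF // -EFinM lee_fin.
rewrite lee_fin in Htau.
have t0 : 0 < t.
  by apply: lt_le_trans Htau; rewrite ltr0n.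
have l20 : 0 < ln (2 : R) by apply: ln_gt0; rewrite ltr1n.
have Ht1 : ln 2 * ((j.+1 * k.+1)%N)%:R <= ln t.
  have -> : ln (2 : R) * ((j.+1 * k.+1)%N)%:R = ln (((2 ^ (j.+1 * k.+1))%N)%:R).
    by rewrite natrX lnXn ?ltr0n // mulr_natr.
  rewrite ler_ln ?posrE ?ltr0n ?expn_gt0 //.
  apply: le_trans Htau; rewrite ler_nat; exact: leqnSn.
have Hm1 : - (ln 2 * ((k.+2 * j.+1)%N)%:R) < ln m.
  have -> : - (ln (2 : R) * ((k.+2 * j.+1)%N)%:R) = ln (c k.+1 j.+1).
    rewrite /c lnV ?posrE ?ltr0n ?expn_gt0 //.
    by rewrite natrX lnXn ?ltr0n // mulr_natr.
  rewrite ltr_ln ?posrE //.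
move: Ht1 Hm1; rewrite !natrM.
set P := (k.+1%:R : R); set a := (j.+1%:R : R); set l2 := ln (2 : R).
have -> : (k.+2%:R : R) = P + 1 by rewrite /P -natr1.
set lt := ln t; set lm := ln m.
move=> Ht1 Hm1.
have P0 : 0 < P by rewrite /P ltr0n.
rewrite ler_pdivlMr //.
have -> : (1 - (P + 1)^-1) * (- lm) = (P * (- lm)) / (P + 1).
  by field; apply/lt0r_neq0; lra.
rewrite ler_pdivrMr; last lra.
have a0 : 0 < a by rewrite /a ltr0n.
have e1 : P * (- lm) <= P * (l2 * ((P + 1) * a)).
  by apply: ler_wpM2l; lra.
have e2 : (P + 1) * (l2 * (a * P)) <= (P + 1) * lt.
  by apply: ler_wpM2l; lra.
have e3 : P * (l2 * ((P + 1) * a)) = (P + 1) * (l2 * (a * P)) by ring.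
lra.
Qed.
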